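(* Let $K$ be a Henselian valued field and $f(x)=\sum_{i=0}^d a_ix^i$ a nonzero polynomial with coefficients in $K$. Let $N$ be a positive integer and $\xi\in\mathrm{RV}_N^\times$. Suppose that \[\mathrm{ord}\Big(\sum_{i=1}^d\mathrm{rv}_N(ia_i)\xi^{i-1}\Big)\le\min_{1\le i\le d}\mathrm{ord}(a_i\xi^{i-1})+\mathrm{ord}\,N,\] and that there exists $\tilde\xi\in\mathrm{RV}_{N^2}$ with $\mathrm{rv}_N(\tilde\xi)=\xi$ and \[0\in\sum_{i=0}^d\mathrm{rv}_{N^2}(a_i)\tilde\xi^i.\] Then there exists a unique $x_0\in K$ with $\mathrm{rv}_N(x_0)=\xi$ and $f(x_0)=0$.
   Context: For a valued field $K$ with valuation ring $\mathcal{O}_K$, maximal ideal $\mathcal{M}_K$, additive value group $\Gamma$ and valuation $\mathrm{ord}\colon K^\times\to\Gamma$ (with $\mathrm{ord}\,0=\infty$), and a positive integer $N$: $\mathrm{RV}_N^\times=K^\times/(1+N\mathcal{M}_K)$ (a multiplicative group), $\mathrm{RV}_N=\mathrm{RV}_N^\times\cup\{0\}$ with multiplication extended by $0$, $\mathrm{rv}_N\colon K\to\mathrm{RV}_N$ the projection with $\mathrm{rv}_N(0)=0$, and for $N\mid M$ the induced map $\mathrm{rv}_N\colon\mathrm{RV}_M\to\mathrm{RV}_N$. The valuation factors through $\mathrm{ord}\colon\mathrm{RV}_N^\times\to\Gamma$. For $\xi_0,\dots,\xi_d\in\mathrm{RV}_N$, $\sum_{i}\xi_i$ denotes the set $\{\mathrm{rv}_N(x_0+\dots+x_d)\mid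 x_i\in K,\ \mathrm{rv}_N(x_i)=\xi_i\}\subseteq\mathrm{RV}_N$. For $A\subseteq\mathrm{RV}_N$ and $\delta\in\Gamma$, $\mathrm{ord}(A)\le\delta$ means $\mathrm{ord}(x)\le\delta$ for all $x\in A$. *)

(* Defs.v *)
From HB Require Import structures.
From mathcomp Require Import all_boot all_order all_algebra.
Set Implicit Arguments. Unset Strict Implicit. Unset Printing Implicit Defensive.
Import Order.TTheory GRing.Theory Num.Theory.
Local Open Scope ring_scope.

(* A valued field is presented by its valuation ring O ⊆ K (the valuation
   ord : K^× -> Γ is recovered up to equivalence as K^× -> K^×/O^×). *)
Definition valuation_ring (K : fieldType) (O : K -> Prop) : Prop :=
  [/\ O 0, O 1,
      (forall x y, O x -> O y -> O (x - y)),
      (forall x y, O x -> O y -> O (x * y)) &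
      (forall x, x != 0 -> O x \/ O x^-1)].

Definition vmax (K : fieldType) (O : K -> Prop) (x : K) : Prop :=
  O x /\ (x = 0 \/ ~ O x^-1).

(* vle O x y  <->  ord x <= ord y   (with ord 0 = oo) *)
Definition vle (K : fieldType) (O : K -> Prop) (x y : K) : Prop :=
  if x == 0 then y = 0 else O (y / x).

Definition henselian (K : fieldType) (O : K -> Prop) : Prop :=
  forall (p : {poly K}) (a : K),
    p \is monic -> (forall i, O p`_i) -> O a ->
    vmax O p.[a] -> ~ vmax O (p^`()).[a] ->
    exists b, [/\ O b, p.[b] = 0 & vmax O (b - a)].

(* rv_eq O N x y  <->  rv_N(x) = rv_N(y), where rv_N : K -> K^×/(1+N M_K) ∪ {0} *)
Definition rv_eq (K : fieldType) (O : K -> Prop) (N : nat) (x y : K) : Prop :=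
  (x = 0 /\ y = 0) \/
  (x != 0 /\ exists m, vmax O m /\ y = x * (1 + N%:R * m)).

(* For ts = [:: t_0; ...; t_d] (representatives of ξ_i = rv_N(t_i)),
   rv_sum_mem O N ts s  <->  rv_N(s) ∈ Σ_i ξ_i
                        =  { rv_N(x_0+...+x_d) | rv_N(x_i) = ξ_i }. *)
Definition rv_sum_mem (K : fieldType) (O : K -> Prop) (N : nat)
    (ts : seq K) (s : K) : Prop :=
  exists xs : seq K,
    [/\ size xs = size ts,
        (forall i, (i < size ts)%N -> rv_eq O N (nth 0 ts i) (nth 0 xs i)) &
        rv_eq O N (\sum_(x <- xs) x) s].

(* Main.v *)
Require Import Defs.
From HB Require Import structures.
From mathcomp Require Import all_boot all_order all_algebra.
From mathcomp Require Import ring zify.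
From Stdlib Require Import Lia.
From Stdlib Require Import Classical.
Import Order.TTheory GRing.Theory Num.Theory.
Local Open Scope ring_scope.

Section Val.
Variables (K : fieldType) (O : K -> Prop).
Hypothesis hO : valuation_ring O.

Lemma O0 : O 0. Proof. by case: hO. Qed.
Lemma O1 : O 1. Proof. by case: hO. Qed.
Lemma OB x y : O x -> O y -> O (x - y). Proof. by case: hO => _ _ h _ _; apply: h. Qed.
Lemma OM x y : O x -> O y -> O (x * y). Proof. by case: hO => _ _ _ h _; apply: h. Qed.
Lemma Oinv x : x != 0 -> O x \/ O x^-1. Proof. by case: hO => _ _ _ _ h; apply: h. Qed.
Lemma ON x : O x -> O (- x).
Proof. by move=> h; rewrite -sub0r; apply: OB => //; apply: O0. Qed.
Lemma OD x y : O x -> O y -> O (x + y).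
Proof. by move=> hx hy; rewrite -[y]opprK; apply: OB => //; apply: ON. Qed.
Lemma Onat n : O n%:R.
Proof. elim: n => [|n IH]; first exact: O0. by rewrite -addn1 natrD; apply: OD => //; apply: O1. Qed.
Lemma OX x n : O x -> O (x ^+ n).
Proof. move=> hx; elim: n => [|n IH]; first by rewrite expr0; apply: O1. by rewrite exprS; apply: OM. Qed.
Lemma OMn x n : O x -> O (x *+ n).
Proof. by move=> hx; rewrite -mulr_natr; apply: OM => //; apply: Onat. Qed.
Lemma Osum (I : Type) (r : seq I) (P : pred I) (F : I -> K) :
  (forall i, P i -> O (F i)) -> O (\sum_(i <- r | P i) F i).
Proof. move=> h; apply: big_ind => //; [exact: O0 | exact: OD]. Qed.

Lemma M_O x : vmax O x -> O x. Proof. by case. Qed.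
Lemma M0 : vmax O 0. Proof. by split; [exact: O0 | left]. Qed.
Lemma MOr a r : vmax O a -> O r -> vmax O (a * r).
Proof.
case=> Oa [->|na] Or; first by rewrite mul0r; exact: M0.
split; first exact: OM.
have [->|r0] := eqVneq r 0; first by left; rewrite mulr0.
have [->|a0] := eqVneq a 0; first by left; rewrite mul0r.
right => H; apply: na.
have -> : a^-1 = r * (a * r)^-1 by rewrite invfM mulrCA mulfV // mulr1.
exact: OM.
Qed.
Lemma MOl r a : O r -> vmax O a -> vmax O (r * a).
Proof. by move=> h1 h2; rewrite mulrC; apply: MOr. Qed.
Lemma Madd a b : vmax O a -> vmax O b -> vmax O (a + b).
Proof.
move=> ha hb.
have [->|a0] := eqVneq a 0; first by rewrite add0r.
have [->|b0] := eqVneq b 0; first by rewrite addr0.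
have ba0 : b / a != 0 by rewrite mulf_neq0 ?invr_eq0.
case: (Oinv _ ba0) => h.
  have -> : a + b = a * (1 + b / a) by rewrite mulrDr mulr1 mulrCA mulfV // mulr1.
  by apply: MOr => //; apply: OD => //; apply: O1.
have -> : a + b = b * (1 + a / b) by rewrite mulrDr mulr1 mulrCA mulfV // mulr1 addrC.
apply: MOr => //; apply: OD; first exact: O1.
by move: h; rewrite invf_div.
Qed.
Lemma MN a : vmax O a -> vmax O (- a).
Proof. by move=> h; rewrite -mulN1r; apply: MOl => //; apply: ON; apply: O1. Qed.
Lemma MB a b : vmax O a -> vmax O b -> vmax O (a - b).
Proof. by move=> ha hb; apply: Madd => //; apply: MN. Qed.
Lemma Msum (I : Type) (r : seq I) (P : pred I) (F : I -> K) :
  (forall i, P i -> vmax O (F i)) -> vmax O (\sum_(i <- r | P i) F i).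
Proof. move=> h; apply: big_ind => //; [exact: M0 | exact: Madd]. Qed.
Lemma MX a n : vmax O a -> vmax O (a ^+ n.+1).
Proof. by move=> h; rewrite exprS; apply: MOr => //; apply: OX; apply: M_O. Qed.
Lemma notM1 : ~ vmax O 1.
Proof. case=> _ [/eqP|]; first by rewrite oner_eq0. by rewrite invr1; apply; apply: O1. Qed.
Lemma one_addM_neq0 m : vmax O m -> 1 + m != 0.
Proof.
move=> hm; apply/eqP => h; apply: notM1.
have -> : 1 = - m by apply/eqP; rewrite -subr_eq0 opprK h.
exact: MN.
Qed.
Lemma Ounit m : vmax O m -> O (1 + m)^-1.
Proof.
move=> hm; apply: NNPP => H; apply: notM1.
have hv : vmax O (1 + m) by split; [apply: OD; [exact: O1|exact: M_O] | right].
have -> : 1 = (1 + m) - m by rewrite addrK.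
exact: MB.
Qed.

Definition near (N : nat) (a b : K) := exists m, vmax O m /\ b = a * (1 + N%:R * m).

Lemma near_refl N a : near N a a.
Proof. by exists 0; split; [exact: M0 | rewrite mulr0 addr0 mulr1]. Qed.
Lemma near_mul N a b c e : near N a b -> near N c e -> near N (a * c) (b * e).
Proof.
move=> [m [hm ->]] [m' [hm' ->]].
exists (m + m' + N%:R * m * m'); split; last by ring.
apply: Madd; first exact: Madd.
by apply: MOr; [apply: MOl => //; apply: Onat | apply: M_O].
Qed.
Lemma near_exp N a b n : near N a b -> near N (a ^+ n) (b ^+ n).
Proof.
move=> h; elim: n => [|n IH]; first by rewrite !expr0; apply: near_refl.
by rewrite !exprS; apply: near_mul.
Qed.
Lemma near_trans N a b c : near N a b -> near N b c -> near N a c.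
Proof.
move=> [m [hm ->]] [m' [hm' ->]].
exists (m + m' + N%:R * m * m'); split; last by ring.
apply: Madd; first exact: Madd.
by apply: MOr; [apply: MOl => //; apply: Onat | apply: M_O].
Qed.
Lemma near_sym N a b : near N a b -> near N b a.
Proof.
move=> [m [hm ->]].
have hNm : vmax O (N%:R * m) by apply: MOl => //; apply: Onat.
set u := (1 + N%:R * m)^-1.
have hu : O u by apply: Ounit.
have u1 : (1 + N%:R * m) * u = 1 by rewrite mulfV // one_addM_neq0.
exists (- (m * u)); split; first by apply: MN; apply: MOr.
have -> : 1 + N%:R * - (m * u) = u.
  by rewrite mulrN mulrA -{1}u1 mulrDl mul1r addrK.
by rewrite -mulrA u1 mulr1.
Qed.
Lemma rv_near N a b : rv_eq O N a b <-> near N a b.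
Proof.
split.
  case=> [[-> ->]|[_ h]] //; exact: near_refl.
move=> [m [hm hb]]; have [a0|a0] := eqVneq a 0.
  by left; split => //; rewrite hb a0 mul0r.
by right; split => //; exists m.
Qed.
Lemma near_N0 N a b : N%:R = 0 :> K -> near N a b -> b = a.
Proof. by move=> h [m [_ ->]]; rewrite h mul0r addr0 mulr1. Qed.


Definition Sj (f : {poly K}) z j := \sum_(i < (size f).-1.+1) f`_i * z ^+ i *+ 'C(i, j).

Lemma expand (f : {poly K}) z t : f != 0 ->
  f.[z * (t + 1)] = \sum_(j < (size f).-1.+1) t ^+ j * Sj f z j.
Proof.
move=> hf; have hs : (size f).-1.+1 = size f by rewrite prednK // size_poly_gt0.
rewrite (@horner_coef_wide _ (size f).-1.+1); last by rewrite hs.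
transitivity (\sum_(i < (size f).-1.+1) \sum_(j < (size f).-1.+1)
   t ^+ j * (f`_i * z ^+ i *+ 'C(i, j))).
  apply: eq_bigr => i _; rewrite exprMn exprD1n.
  rewrite (big_ord_widen _ (fun j => t ^+ j *+ 'C(i, j)) (ltn_ord i)).
  rewrite big_mkcond mulrA mulr_sumr; apply: eq_bigr => j _; case: ifP => hj.
    by rewrite !mulrnAr mulrC.
  by rewrite bin_small ?mulr0n ?mulr0 // ltnNge -ltnS hj.
by rewrite exchange_big; apply: eq_bigr => j _; rewrite /Sj mulr_sumr.
Qed.

Lemma Sj0 (f : {poly K}) z : f != 0 -> Sj f z 0 = f.[z].
Proof.
move=> hf; have hs : (size f).-1.+1 = size f by rewrite prednK // size_poly_gt0.
rewrite (@horner_coef_wide _ (size f).-1.+1); last by rewrite hs.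
by rewrite /Sj; apply: eq_bigr => i _; rewrite bin0.
Qed.


Lemma Hz (f : {poly K}) (N : nat) (x z : K) (hf : f != 0) (hx : x != 0)
  (hN : N%:R != 0 :> K) (hd : (0 < (size f).-1)%N)
  (H1 : forall s, rv_sum_mem O N [seq (i%:R * f`_i) * x ^+ i.-1 | i <- iota 1 (size f).-1] s ->
     forall i, (1 <= i <= (size f).-1)%N -> vle O s ((f`_i * x ^+ i.-1) * N%:R))
  (hz : near N z x) :
  Sj f z 1 != 0 /\ forall i, (1 <= i <= (size f).-1)%N -> O (N%:R * (f`_i * z ^+ i) / Sj f z 1).
Proof.
set d := (size f).-1.
set s := \sum_(i <- iota 1 d) (i%:R * f`_i) * z ^+ i.-1.
have hs : rv_sum_mem O N [seq (i%:R * f`_i) * x ^+ i.-1 | i <- iota 1 d] s.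
  exists [seq (i%:R * f`_i) * z ^+ i.-1 | i <- iota 1 d]; split.
  - by rewrite !size_map.
  - move=> i; rewrite size_map size_iota => hi.
    rewrite !(nth_map 0) ?size_iota // nth_iota //; apply/rv_near.
    by apply: near_mul; [exact: near_refl | apply: near_exp; exact: near_sym].
  - by apply/rv_near; rewrite big_map; exact: near_refl.
have hz0 : z != 0.
  by apply/eqP => z0; move: hz => [m [_ hm]]; move: hx; rewrite hm z0 mul0r eqxx.
have hD : Sj f z 1 = z * s.
  rewrite /Sj big_ord_recl /= bin0n mulr0n add0r /s.
  have -> : iota 1 d = map (addn 1) (index_iota 0 d) by rewrite /index_iota subn0 -iotaDl.
  rewrite big_map big_mkord mulr_sumr; apply: eq_bigr => i _.
  by rewrite bin1 /= add1n /= exprS -mulr_natl /bump leq0n add1n add0n; ring.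
have := H1 s hs.
have sne0 : s != 0.
  apply/eqP => s0; move/(_ d): (H1 s hs); rewrite /vle s0 eqxx.
  move=> /(_ _)/eqP; rewrite hd leqnn => /(_ isT).
  rewrite !mulf_eq0 expf_eq0 (negbTE hx) (negbTE hN) andbF !orbF.
  have : lead_coef f != 0 by rewrite lead_coef_eq0.
  by rewrite lead_coefE => /negbTE ->.
move=> H1s; split; first by rewrite hD mulf_neq0.
move=> i hi; have := H1s i hi; rewrite /vle (negbTE sne0) => hO'.
move: hz => [m [hm hxz]].
have hNm : vmax O (N%:R * m) by apply: MOl => //; apply: Onat.
have c0 := one_addM_neq0 _ hNm.
have hw := Ounit _ hNm.
case: i hi hO' => [//|i] hi hO' /=.
have -> : N%:R * (f`_i.+1 * z ^+ i.+1) / Sj f z 1 =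
   f`_i.+1 * x ^+ i * N%:R / s * ((1 + N%:R * m)^-1) ^+ i.
  rewrite hD hxz exprMn exprVn exprS; field.
  by rewrite expf_neq0 ?sne0 ?hz0.
by apply: OM => //; apply: OX.
Qed.

Lemma OSj (f : {poly K}) (N : nat) z j (hj : (0 < j)%N)
  (hu : forall i, (1 <= i <= (size f).-1)%N -> O (N%:R * (f`_i * z ^+ i) / Sj f z 1)) :
  O (N%:R * Sj f z j / Sj f z 1).
Proof.
rewrite {2}/Sj mulr_sumr mulr_suml; apply: Osum => i _.
case: i => [[|i] hi] /=.
  by rewrite bin0n eqn0Ngt hj mulr0n mulr0 mul0r; exact: O0.
rewrite mulrnAr mulrnAl; apply: OMn; apply: hu; rewrite /=.
by rewrite -ltnS.
Qed.


Lemma monic_part (hens : henselian O) (q : nat -> K) (e : nat)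
  (q0 : q 0%N = 1) (q1 : q 1%N = 1) (qM : forall j, vmax O (q j.+2)) :
  exists s, O s /\ \sum_(j < e.+2) q j * s ^+ j = 0.
Proof.
have qO : forall j, O (q j).
  by case=> [|[|j]]; rewrite ?q0 ?q1; [exact: O1 | exact: O1 | apply: M_O].
set P := \poly_(k < e.+2) q (e.+1 - k)%N.
have hP : size P = e.+2 by rewrite size_poly_eq //= subnn q0 oner_neq0.
have mon : P \is monic by rewrite monicE lead_coefE hP coef_poly /= ltnSn subnn q0.
have cO : forall i, O P`_i.
  by move=> i; rewrite coef_poly; case: ifP => _; [apply: qO | apply: O0].
have h1 : vmax O P.[-1].
  rewrite horner_poly !big_ord_recr /= subnn q0 subSnn q1 exprS mulN1r mul1r mul1r.
  rewrite -addrA subrr addr0; apply: Msum => k _.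
  have -> : (e.+1 - widen_ord (leqnSn e.+1) (widen_ord (leqnSn e) k) = (e.-1 - k).+2)%N.
    by rewrite /=; case: k => k hk /=; lia.
  by apply: MOr; [apply: qM | apply: OX; apply: ON; apply: O1].
have h2gen : forall n, ~ vmax O (\sum_(i < n.+1) (q (n - i)%N *+ i.+1) * (-1) ^+ i).
  case=> [|e'].
    by rewrite big_ord1 /= q0 mulr1n mulr1; apply: notM1.
  rewrite !big_ord_recr /= subnn q0 subSnn q1.
  set R := \sum_(i < e') _.
  have hR : vmax O R.
    apply: Msum => k _.
    have -> : (e'.+1 - k = (e'.-1 - k).+2)%N by case: k => k hk /=; lia.
    by apply: MOr; [rewrite -mulr_natr; apply: MOr => //; apply: Onat | apply: OX; apply: ON; apply: O1].
  have -> : R + 1 *+ e'.+1 * (-1) ^+ e' + 1 *+ e'.+2 * (-1) ^+ e'.+1 = R + - (-1) ^+ e'.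
    by rewrite exprS [e'.+2%:R]mulrS -addrA; congr (_ + _); ring.
  move=> hv; apply: notM1.
  have hc : vmax O (- (-1) ^+ e') by rewrite -[X in vmax O X](addKr R); apply: Madd => //; apply: MN.
  have -> : 1 = (- (-1) ^+ e') * (- (-1) ^+ e' :> K) by rewrite mulrNN -exprMn mulrNN mulr1 expr1n.
  by apply: MOr => //; apply: M_O.
have h2 : ~ vmax O (P^`()).[-1].
  have hsd : (size P^`() <= e.+1)%N.
    by rewrite -ltnS -hP lt_size_deriv // monic_neq0.
  rewrite (horner_coef_wide _ hsd).
  under eq_bigr => i _ do rewrite coef_deriv coef_poly ltnS (ltn_ord i) subSS.
  exact: h2gen.
have [b [Ob Pb hb]] := hens P (-1) mon cO (ON _ O1) h1 h2.
rewrite opprK in hb.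
have b0 : b != 0 by apply/eqP => b0; move: hb; rewrite b0 add0r; apply: notM1.
exists b^-1; split.
  have e1 : 1 + - (b + 1) = - b by rewrite opprD addrCA subrr addr0.
  have := Ounit _ (MN _ hb); rewrite e1 invrN => h.
  by rewrite -[b^-1]opprK; apply: ON.
transitivity (b^-1 ^+ e.+1 * \sum_(k < e.+2) q (e.+1 - k)%N * b ^+ k); last first.
  by move: Pb; rewrite horner_poly => ->; rewrite mulr0.
rewrite (reindex_inj rev_ord_inj) /= mulr_sumr; apply: eq_bigr => k _.
rewrite subSS; set m := (e.+1 - k)%N.
have -> : b^-1 ^+ e.+1 = b^-1 ^+ m * b^-1 ^+ k by rewrite -exprD /m subnK // -ltnS.
rewrite !exprVn; field.
by rewrite !expf_neq0.
Qed.

End Val.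

Arguments near {K} O N a b.
Arguments Sj {K} f z j.
Arguments rv_near {_ _}.
Arguments Hz {_ _}.
Arguments MOl {_ _}.
Arguments MOr {_ _}.
Arguments one_addM_neq0 {_ _}.
Arguments near_N0 {_ _ N a b}.
Arguments near_refl {_ _}.
Arguments near_sym {_ _} _ {N a b}.
Arguments near_trans {_ _} _ {N a b c}.
Arguments near_mul {_ _}.
Arguments Onat {_ _}.
Arguments OD {_ _}.
Arguments O1 {_ _}.
Arguments O0 {_ _}.
Arguments OM {_ _}.
Arguments OX {_ _}.
Arguments ON {_ _}.
Arguments MN {_ _}.
Arguments MX {_ _}.
Arguments M_O {_ _}.
Arguments M0 {_ _}.
Arguments OSj {_ _}.
Arguments monic_part {_ _}.
Arguments expand {_}.
Arguments Sj0 {_}.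
Arguments Osum {_ _}.
Arguments Msum {_ _}.
Arguments Ounit {_ _}.
Arguments notM1 {_ _}.
Arguments OMn {_ _}.

Theorem lemma2p8 (K : fieldType) (O : K -> Prop)
  (hO : valuation_ring O) (hhens : henselian O)
  (f : {poly K}) (hf : f != 0) (N : nat) (hN : (0 < N)%N)
  (x : K) (hx : x != 0) :
  let d := (size f).-1 in
  (forall s : K,
     rv_sum_mem O N [seq (i%:R * f`_i) * x ^+ i.-1 | i <- iota 1 d] s ->
     forall i : nat, (1 <= i <= d)%N ->
       vle O s ((f`_i * x ^+ i.-1) * N%:R)) ->
  (exists y : K,
     rv_eq O N y x /\
     rv_sum_mem O (N * N) [seq f`_i * y ^+ i | i <- iota 0 d.+1] 0) ->
  exists! x0 : K, rv_eq O N x0 x /\ f.[x0] = 0.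
Proof.
move=> d H1 [y [hyx [xs [hsz hxs hsum]]]].
have hd : (size f).-1 = d by [].
have hs : d.+1 = size f by rewrite /d prednK // size_poly_gt0.
have hsz' : size xs = d.+1 by rewrite hsz size_map size_iota.
have hxs' : forall i, (i < d.+1)%N -> near O (N * N) (f`_i * y ^+ i) (nth 0 xs i).
  move=> i hi; apply/(rv_near hO); move: (hxs i).
  by rewrite size_map size_iota (nth_map 0%N) ?size_iota // nth_iota // add0n; apply.
have hsum0 : \sum_(i < d.+1) nth 0 xs i = 0.
  move: hsum; rewrite (big_nth 0) hsz' big_mkord => /(rv_near hO) [m [hm]].
  move/esym/eqP; rewrite mulf_eq0 => /orP [/eqP //|].
  by rewrite (negbTE (one_addM_neq0 hO _ _)) //; apply: (MOl hO) => //; apply: (Onat hO).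
have hyx' : near O N y x by apply/(rv_near hO).
have hfy : f.[y] = \sum_(i < d.+1) f`_i * y ^+ i by rewrite (@horner_coef_wide _ d.+1) ?hs.
have [d0|dpos] := posnP d.
  exfalso; move: hsum0; rewrite d0 big_ord1 => h0.
  have [m [hm]] := hxs' 0%N isT.
  rewrite h0 expr0 mulr1 => /esym/eqP; rewrite mulf_eq0 (negbTE (one_addM_neq0 hO _ _)) ?orbF.
    have : lead_coef f != 0 by rewrite lead_coef_eq0.
    by rewrite lead_coefE hd d0 => /negbTE ->.
  by apply: (MOl hO) => //; apply: (Onat hO).
have [N0|hN0] := eqVneq (N%:R : K) 0.
  have yx : x = y := near_N0 N0 hyx'.
  have NN0 : (N * N)%:R = 0 :> K by rewrite natrM N0 mul0r.
  have fy0 : f.[y] = 0.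
    rewrite hfy -[RHS]hsum0; apply: eq_bigr => i _.
    by have := hxs' i (ltn_ord i); move/(near_N0 NN0) ->.
  exists x; split; first by split; [apply/(rv_near hO); exact: near_refl | rewrite yx].
  by move=> x' [/(rv_near hO) h _]; rewrite (near_N0 N0 h).
have [e de] : exists e, (size f).-1 = e.+1 by exists d.-1; rewrite prednK.
have uniq : forall x0 x1, near O N x0 x -> near O N x1 x -> f.[x0] = 0 -> f.[x1] = 0 -> x1 = x0.
  move=> x0 x1 h0 h1 f0 f1.
  have [D0 hu] := Hz hO f N x x0 hf hx hN0 dpos H1 h0.
  have [m [hm ex1]] : near O N x0 x1 := near_trans hO h0 (near_sym hO h1).
  have x00 : x0 != 0 by apply/eqP => z0; move: h0 => [m0 [_ hm0]]; move: hx; rewrite hm0 z0 mul0r eqxx.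
  have b0 : forall k, bump 0 k = k.+1 by move=> k; rewrite /bump leq0n add1n.
  move: f1; rewrite ex1 addrC expand // de !big_ord_recl /= !b0 expr0 mul1r Sj0 // f0 add0r expr1.
  set T := \sum_(i < e) _.
  set B := \sum_(i < e) m ^+ i.+1 * N%:R ^+ i * (N%:R * Sj f x0 i.+2 / Sj f x0 1).
  have -> : N%:R * m * Sj f x0 1 + T = N%:R * m * Sj f x0 1 * (1 + B).
    rewrite mulrDr mulr1 /B /T [X in _ = _ + X]mulr_sumr; congr (_ + _); apply: eq_bigr => i _.
    rewrite !b0 !exprS exprMn; field; exact: D0.
  have hB : vmax O B.
    apply: (Msum hO) => i _; apply: (MOr hO); first by apply: (MOr hO); [apply: (MX hO) | apply: (OX hO); apply: (Onat hO)].
    by apply: (OSj hO).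
  move/eqP; rewrite !mulf_eq0 (negbTE hN0) (negbTE D0) (negbTE (one_addM_neq0 hO _ hB)) !orbF /=.
  by move/eqP ->; rewrite mulr0 add0r mulr1.
have [D hu] := Hz hO f N x y hf hx hN0 dpos H1 hyx'.
have hNNm : forall m, vmax O m -> vmax O ((N * N)%:R * m).
  by move=> m hm; apply: (MOl hO) => //; apply: (Onat hO).
have hu0 : forall i, (i <= d)%N -> O (N%:R * (f`_i * y ^+ i) / Sj f y 1).
  case=> [_|i hi]; last by apply: hu.
  have hsum1 : \sum_(i < d.+1) N%:R * nth 0 xs i / Sj f y 1 = 0.
    by rewrite -mulr_suml -mulr_sumr hsum0 mulr0 mul0r.
  move: hsum1; rewrite big_ord_recl => /eqP; rewrite addr_eq0 => /eqP h.
  have hx0 : O (N%:R * nth 0 xs 0 / Sj f y 1).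
    rewrite h; apply: (ON hO); apply: (Osum hO) => i _.
    have [m [hm ->]] := hxs' (lift ord0 i) (ltn_ord _).
    have -> : forall a c : K, N%:R * (a * c) / Sj f y 1 = N%:R * a / Sj f y 1 * c.
      by move=> a c; rewrite !mulrA [RHS]mulrAC.
    apply: (OM hO).
      by apply: hu; rewrite lift0 /=; exact: ltn_ord i.
    apply: (OD hO); first exact: (O1 hO).
    exact: (M_O _ (hNNm _ hm)).
  have [m [hm e0]] := hxs' 0%N isT.
  have c0 := one_addM_neq0 hO _ (hNNm _ hm).
  have -> : N%:R * (f`_0 * y ^+ 0) / Sj f y 1 =
      N%:R * nth 0 xs 0 / Sj f y 1 * (1 + (N * N)%:R * m)^-1.
    by rewrite e0; field; rewrite -natrM c0 D.
  by apply: (OM hO) => //; apply: (Ounit hO); apply: hNNm.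
have [x0 [h0 f0]] : exists x0, near O N x0 x /\ f.[x0] = 0.
  have [fy0|fy0] := eqVneq f.[y] 0; first by exists y.
  set g := f.[y] / Sj f y 1.
  have hg : vmax O (g / N%:R).
    have -> : g / N%:R = \sum_(i < d.+1) (f`_i * y ^+ i - nth 0 xs i) / (Sj f y 1 * N%:R).
      by rewrite -mulr_suml sumrB -hfy hsum0 subr0 /g; field; rewrite D hN0.
    apply: (Msum hO) => i _; have [m [hm ->]] := hxs' i (ltn_ord i).
    have -> : (f`_i * y ^+ i - f`_i * y ^+ i * (1 + (N * N)%:R * m)) / (Sj f y 1 * N%:R)
        = - (N%:R * (f`_i * y ^+ i) / Sj f y 1 * m).
      by rewrite natrM; field; rewrite D hN0.
    apply: (MN hO); apply: (MOl hO) => //; apply: hu0; rewrite -ltnS; exact: ltn_ord i.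
  set q := fun j => g ^+ j * Sj f y j / f.[y].
  have q0 : q 0%N = 1 by rewrite /q expr0 mul1r Sj0 // mulfV.
  have q1 : q 1%N = 1 by rewrite /q expr1 /g; field; rewrite D fy0.
  have qM : forall j, vmax O (q j.+2).
    move=> j; have -> : q j.+2 = (g / N%:R) ^+ j.+1 * N%:R ^+ j * (N%:R * Sj f y j.+2 / Sj f y 1).
      rewrite /q /g !exprS !expr_div_n; field.
      by rewrite D fy0 hN0 !expf_neq0.
    apply: (MOr hO); first by apply: (MOr hO); [apply: (MX hO) | apply: (OX hO); apply: (Onat hO)].
    by apply: (OSj hO).
  have [s [Os hs0]] := monic_part hO hhens q e q0 q1 qM.
  exists (y * (g * s + 1)); split.
    have hy0 : near O N y (y * (g * s + 1)).
      exists (g / N%:R * s); split; first by apply: (MOr hO).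
      by rewrite addrC; congr (_ * (1 + _)); field.
    by have := near_trans hO (near_sym hO hy0) hyx'.
  rewrite (expand f y (g * s) hf) de.
  transitivity (f.[y] * \sum_(j < e.+2) q j * s ^+ j); last by rewrite hs0 mulr0.
  rewrite mulr_sumr; apply: eq_bigr => j _; rewrite /q exprMn; field.
  by [].
exists x0; split; first by split => //; apply/(rv_near hO).
move=> x1 [/(rv_near hO) h1 f1].
by rewrite (uniq x0 x1 h0 h1 f0 f1).
Qed.
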